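(* Let $\mathcal{L}\in\mathrm{Mat}_d(\mathbb{Q})$ have no non-trivial invariant subspace over $\mathbb{Q}$, let $K>0$, and let $A\subset \mathbb{Z}^d$ be a finite set with $|A|=n$ and $|A+\mathcal{L} A|\leq Kn$. If $U$ is a vector subspace of $\mathbb{Q}^d$ of dimension $k<d$, then every translate $u+U$ ($u\in\mathbb{Q}^d$) of $U$ contains at most $(Kn)^{1-2^{-k}}$ points of $A$.
   Context: A non-trivial invariant subspace of $\mathcal{L}$ over $\mathbb{Q}$ is a subspace $W\subseteq\mathbb{Q}^d$ with $W\ne\{0\},\mathbb{Q}^d$ and $\mathcal{L}W\subseteq W$. $\mathcal{L}A=\{\mathcal{L}a:a\in A\}$. *)

(* Defs.v *)
From HB Require Import structures.
From mathcomp Require Import all_boot all_order all_algebra finmap.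
From mathcomp Require Import all_classical all_reals all_analysis.
Set Implicit Arguments. Unset Strict Implicit. Unset Printing Implicit Defensive.
Import Order.TTheory GRing.Theory Num.Theory.
Local Open Scope ring_scope.

Definition nontriv_invariant (d : nat) (L : 'M[rat]_d) (W : {vspace 'cV[rat]_d}) : Prop :=
  W != 0%VS /\ W != fullv /\ (forall w, w \in W -> L *m w \in W).

Definition no_nontriv_invariant (d : nat) (L : 'M[rat]_d) : Prop :=
  forall W : {vspace 'cV[rat]_d}, ~ nontriv_invariant L W.

Definition is_int_vec (d : nat) (v : 'cV[rat]_d) : bool :=
  [forall i, v i ord0 \is a Num.int].

Definition sum_LA (d : nat) (L : 'M[rat]_d) (A : {fset 'cV[rat]_d}) : {fset 'cV[rat]_d} :=
  [fset (a + L *m b)%R | a in A, b in A]%fset.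

Definition pts_in_translate (d : nat) (A : {fset 'cV[rat]_d})
  (u : 'cV[rat]_d) (U : {vspace 'cV[rat]_d}) : {fset 'cV[rat]_d} :=
  [fset a in A | ((a - u)%R \in U)]%fset.

(* Main.v *)
Require Import Defs.
From HB Require Import structures.
From mathcomp Require Import all_boot all_order all_algebra finmap.
From mathcomp Require Import all_classical all_reals all_analysis.
From mathcomp Require Import ring.
Import Order.TTheory GRing.Theory Num.Theory.
Local Open Scope ring_scope.

Lemma sum_bool_count (T : Type) (r : seq T) (P : pred T) :
  (\sum_(x <- r) (P x : nat) = count P r)%N.
Proof. by elim: r => [|x r IH]; rewrite ?big_nil ?big_cons ?IH. Qed.
Lemma sum_const_seq_nat (T : Type) (r : seq T) (c : nat) :
  (\sum_(x <- r) c = size r * c)%N.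
Proof. by elim: r => [|x r IH]; rewrite ?big_nil ?big_cons ?IH ?mulSn. Qed.
Lemma sum_const_seqR (R : numDomainType) (T : Type) (r : seq T) (c : R) :
  \sum_(x <- r) c = (size r)%:R * c.
Proof. elim: r => [|x r IH]; rewrite ?big_nil ?big_cons ?IH ?mul0r //=.
by rewrite -addn1 natrD mulrDl mul1r addrC. Qed.

Lemma sq_count (d : nat) (L : 'M[rat]_d) (B S : seq 'cV[rat]_d) :
  uniq B -> uniq S ->
  (forall b b', b \in B -> b' \in B -> b + L *m b' \in S) ->
  (size B * size B = \sum_(s <- S) count (fun b' => (s - L *m b')%R \in B) B)%N.
Proof.
move=> uB uS HS.
have -> : (size B * size B = \sum_(b <- B) \sum_(b' <- B) \sum_(s <- S) nat_of_bool (s == (b + L *m b')%R))%N.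
  rewrite -sum_const_seq_nat; apply: eq_big_seq => b bB.
  rewrite -[size B]muln1 -sum_const_seq_nat; apply: eq_big_seq => b' b'B.
  rewrite sum_bool_count.
  symmetry; transitivity (count_mem (b + L *m b') S); first by apply: eq_count.
  by rewrite count_uniq_mem // HS.
under eq_bigr => b _ do rewrite exchange_big.
rewrite exchange_big /=; apply: eq_bigr => s _.
rewrite exchange_big /= -[RHS]sum_bool_count; apply: eq_bigr => b' _.
rewrite -(count_uniq_mem (s - L *m b') uB) -sum_bool_count; apply: eq_bigr => b _.
by rewrite /= [b == _]eq_sym subr_eq.
Qed.


Lemma grp (V : zmodType) (s x y w : V) : (s - y - w) - (s - x - w) = x - y.
Proof. by rewrite opprB addrA subrK opprB addrC addrA subrK. Qed.

Lemma fiber_bound (d : nat) (L : 'M[rat]_d) (A : {fset 'cV[rat]_d})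
  (V : {vspace 'cV[rat]_d}) (w s : 'cV[rat]_d) :
  exists z, (count (fun b' => (s - L *m b')%R \in pts_in_translate A w V)
                   (pts_in_translate A w V)
             <= #|` pts_in_translate A z (V :&: (linfun (@mulmx rat d d 1 L) @^-1: V))%VS|)%N.
Proof.
set B := pts_in_translate A w V.
case: (boolP (has (fun b' => (s - L *m b') \in B) B)) => [/hasP [b0 b0B Pb0] | hn]; last first.
  by exists w; move: hn; rewrite has_count -leqNgt leqn0 => /eqP ->.
exists b0; rewrite -size_filter; apply: uniq_leq_size; first exact/filter_uniq/fset_uniq.
move=> b'; rewrite mem_filter => /andP [Pb' b'B].
move: b'B Pb' b0B Pb0; rewrite /B !inE => /andP [b'A b'V] /andP [_ y'V] /andP [_ b0V] /andP [_ y0V].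
rewrite b'A /= memv_cap -memv_preim lfunE /= mulmxBr.
rewrite -(grp _ s (L *m b') (L *m b0) w) (memvB y0V y'V) andbT.
have -> : b' - b0 = (b' - w) - (b0 - w) by rewrite opprB addrA subrK.
exact: memvB.
Qed.


Lemma exp_arith (R : realType) (N : R) (k : nat) : 1 <= N ->
  N * N `^ (1 - (2 ^+ k)^-1) = (N `^ (1 - (2 ^+ k.+1)^-1)) ^+ 2.
Proof.
move=> N1; have N0 : N != 0 by apply/negP => /eqP N0; move: N1; rewrite N0 ler10.
have Nge : 0 <= N by apply: le_trans N1.
rewrite expr2 -powRD ?N0 ?implybT // -{1}(powRr1 Nge) -powRD ?N0 ?implybT //.
congr powR. rewrite exprS invfM.
have h : (2 ^+ k : R) != 0 by rewrite expf_neq0 // pnatr_eq0.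
field; exact: h.
Qed.

Lemma e_ge0 (R : realType) (k : nat) : 0 <= 1 - ((2 : R) ^+ k)^-1.
Proof.
rewrite subr_ge0 invf_le1 ?exprn_gt0 //; by apply: exprn_ege1; rewrite ler1n.
Qed.


Lemma pts_sub (d : nat) (A : {fset 'cV[rat]_d}) w V :
  (pts_in_translate A w V `<=` A)%fset.
Proof. by apply/fsubsetP => x; rewrite !inE => /andP []. Qed.

Lemma pts0 (d : nat) (A : {fset 'cV[rat]_d}) w :
  (#|` pts_in_translate A w 0%VS| <= 1)%N.
Proof.
have h : (pts_in_translate A w 0%VS `<=` [fset w])%fset.
  by apply/fsubsetP => x; rewrite !inE memv0 subr_eq0 => /andP [_ ->].
by apply: leq_trans (fsubset_leq_card h) _; rewrite cardfs1.
Qed.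

Lemma sumLA_sub (d : nat) (L : 'M[rat]_d) (A B : {fset 'cV[rat]_d}) :
  (B `<=` A)%fset -> (sum_LA L B `<=` sum_LA L A)%fset.
Proof.
move=> /fsubsetP BA; apply/fsubsetP => x /imfset2P [a aB [b bB ->]].
by apply: in_imfset2; apply: BA.
Qed.

Lemma main_ind (R : realType) (d : nat) (L : 'M[rat]_d) (A : {fset 'cV[rat]_d}) (N : R) :
  no_nontriv_invariant L -> 1 <= N -> (#|` sum_LA L A|%:R <= N) ->
  forall k, (k < d)%N -> forall V w, (\dim V <= k)%N ->
  (#|` pts_in_translate A w V|)%:R <= N `^ (1 - (2 ^+ k)^-1).
Proof.
move=> HL N1 HN; have Nge : 0 <= N by apply: le_trans N1.
have pow1 : forall k, 1 <= N `^ (1 - ((2:R) ^+ k)^-1).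
  by move=> k; rewrite -[X in X <= _](powRr0 N); apply: ler_powR => //; apply: e_ge0.
elim=> [|k IH] kd V w dV.
  have /eqP -> : V == 0%VS by rewrite -dimv_eq0 -leqn0.
  by rewrite expr0 invr1 subrr powRr0 (_ : (1:R) = 1%:R) // ler_nat pts0.
set V' := (V :&: (linfun (@mulmx rat d d 1 L) @^-1: V))%VS.
case: (eqVneq V' V) => HV'.
  case: (eqVneq V 0%VS) => [-> | V0].
    by apply: le_trans (pow1 k.+1); rewrite (_ : (1:R) = 1%:R) // ler_nat pts0.
  exfalso; apply: (HL V); split => //; split.
    apply/eqP => Vf; move: dV kd; rewrite Vf dimvf /dim /= muln1 => h1 h2.
    by move: (leq_ltn_trans h1 h2); rewrite ltnn.
  move=> x; rewrite -{1}HV' memv_cap -memv_preim lfunE /= => /andP [_ ->] //.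
have dV' : (\dim V' <= k)%N.
  have sV : (V' <= V)%VS by apply: capvSl.
  move: HV'; rewrite eqEdim sV /= -ltnNge => h.
  by rewrite -ltnS; apply: leq_trans h dV.
set M := N `^ (1 - ((2:R) ^+ k)^-1).
have IHk : forall z, (#|` pts_in_translate A z V'|)%:R <= M.
  by move=> z; apply: IH => //; apply: ltnW.
set B := pts_in_translate A w V.
set S := sum_LA L B.
have E := @sq_count d L B S (fset_uniq _) (fset_uniq _).
have E' : (size B * size B)%N = \sum_(s <- S) count (fun b' => (s - L *m b')%R \in B) B.
  by apply: E => b b' bB b'B; apply: in_imfset2.
have SN : (size S)%:R <= N.
  apply: le_trans HN; rewrite ler_nat; apply: fsubset_leq_card.
  by apply: sumLA_sub; apply: pts_sub.
have Mge : 0 <= M by apply: powR_ge0.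
have sq : ((size B)%:R : R) ^+ 2 <= N * M.
  rewrite expr2 -natrM E' natr_sum.
  apply: le_trans (_ : \sum_(s <- S) M <= _).
    apply: ler_sum => s _.
    have [z Hz] := fiber_bound _ L A V w s.
    apply: le_trans (IHk z); rewrite ler_nat; exact: Hz.
  rewrite sum_const_seqR; exact: ler_wpM2r.
rewrite -(ler_pXn2r (n := 2)) //; last by rewrite nnegrE powR_ge0.
  by rewrite -exp_arith.
by rewrite nnegrE.
Qed.

Theorem lemma2p4 (R : realType) (d : nat) (L : 'M[rat]_d) (K : R)
  (A : {fset 'cV[rat]_d}) (U : {vspace 'cV[rat]_d}) (u : 'cV[rat]_d) :
  no_nontriv_invariant L ->
  0 < K ->
  (forall a, a \in A -> is_int_vec a) ->
  ((#|` sum_LA L A|)%:R <= K * (#|` A|)%:R) ->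
  (\dim U < d)%N ->
  ((#|` pts_in_translate A u U|)%:R : R)
    <= (K * (#|` A|)%:R) `^ (1 - (2 ^+ (\dim U))^-1).
Proof.
move=> HL K0 _ HN dU.
case: (eqVneq A fset0) => [A0 | An0].
  have : (#|` pts_in_translate A u U| <= #|` A|)%N by apply/fsubset_leq_card/pts_sub.
  by rewrite A0 cardfs0 leqn0 => /eqP ->; rewrite powR_ge0.
have N1 : 1 <= K * (#|` A|)%:R.
  apply: le_trans HN; rewrite ler1n cardfs_gt0.
  case/fset0Pn: An0 => a aA; apply/fset0Pn; exists (a + L *m a).
  exact: in_imfset2.
exact: (@main_ind _ _ _ _ _ HL N1 HN _ dU U u (leqnn _)).
Qed.
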